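(* Let $V\subseteq\mathcal V$ be finite, $\mathcal E\in\mathit{DProg}(V)$, $W\subseteq\mathcal V$ finite and $Q$ a projector on $\mathcal H_W$. Then $wp^p.\mathcal E.Q=E(\mathcal E^\dagger(Q))$, $wlp^p.\mathcal E.Q=\mathcal N(\mathcal E^\dagger(Q^\perp))$, and $sp^p.\mathcal E.Q=\lceil\mathcal E(Q)\rceil$.
   Context: $\mathcal V$ is a countably infinite set of qubit variables; $\mathcal H_V=\bigotimes_{q\in V}\mathcal H_q$. $\mathcal D(\mathcal H)$: partial density operators; projectors are identified with their image subspaces, ordered by inclusion $\sqsubseteq$; $Q^\perp=I-Q$. $\mathit{DProg}(V)$: completely positive trace-nonincreasing super-operators on $\mathcal L(\mathcal H_V)$; $\mathcal E^\dagger$ its adjoint (${\rm tr}(\mathcal E(A)B)={\rm tr}(A\mathcal E^\dagger(B))$). Convention: operators and super-operators are implicitly extended to $\mathcal H_{V\cup W}$ (and larger systems) by tensoring with identities; all projectors below are regarded on $\mathcal H_{V\cup W}$. $E(A)=\{|\psi\rangle:A|\psi\rangle=|\psi\rangle\}$; $\mathcal N(B)=\{|\psi\rangle:\langle\psi|B|\psi\rangle=0\}$; $\lceil\rho\rceil$ is the support of a positive $\rho$ (span of eigenvectors with nonzero eigenvalues). For projectors $P,Q$: $\mathcal E\models_{tot}(P,Q)$ iff for all finite $X\supseteq V\cup W$ and $\rho\in\mathcal D(\mathcal H_X)$, ${\rm tr}(P\rho)\le{\rm tr}(Q\mathcal E(\rho))$; $\mathcal E\models_{par}(P,Q)$ iff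 for all such $X,\rho$, ${\rm tr}(P\rho)\le{\rm tr}(Q\mathcal E(\rho))+{\rm tr}(\rho)-{\rm tr}(\mathcal E(\rho))$. $wp^p.\mathcal E.Q$ is the largest projector $P$ (w.r.t. $\sqsubseteq$) with $\mathcal E\models_{tot}(P,Q)$; $wlp^p.\mathcal E.Q$ the largest projector $P$ with $\mathcal E\models_{par}(P,Q)$; $sp^p.\mathcal E.Q$ the smallest projector $R$ with $\mathcal E\models_{par}(Q,R)$. *)

(* Defs.v *)
From HB Require Import structures.
From mathcomp Require Import all_boot all_order all_algebra.
From mathcomp Require Import finmap.

Set Implicit Arguments.
Unset Strict Implicit.
Unset Printing Implicit Defensive.

Import Order.TTheory GRing.Theory Num.Theory.
Local Open Scope ring_scope.


(* Qubit variables: nat (countably infinite).  A finite set of variables is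
   X : {fset nat}.  The computational basis of H_X is indexed by the
   classical assignments X -> bool. *)
Definition Bs (X : {fset nat}) := {ffun X -> bool}.
Definition dim (X : {fset nat}) : nat := #|{: Bs X}|.

Definition Op (C : numClosedFieldType) (X : {fset nat}) := 'M[C]_(dim X).
Definition Vec (C : numClosedFieldType) (X : {fset nat}) := 'cV[C]_(dim X).

Definition rk (X : {fset nat}) (s : Bs X) : 'I_(dim X) := enum_rank s.
Definition ev (X : {fset nat}) (i : 'I_(dim X)) : Bs X := enum_val i.

(* restriction of an assignment on X to V (meaningful when V is a subset of X) *)
Definition rest (V X : {fset nat}) (s : Bs X) : Bs V :=
  [ffun v : V => odflt false (omap s (insub (val v)))].
Arguments rest V {X} s.

Definition comb (V X : {fset nat}) (a : Bs V) (s : Bs X) : Bs X :=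
  [ffun x : X => odflt (s x) (omap a (insub (val x)))].

Definition hadj (C : numClosedFieldType) m n (A : 'M[C]_(m, n)) : 'M[C]_(n, m) :=
  map_mx Num.conj A^T.

(* implicit extension A (x) I_{X \ V} of an operator A on H_V to H_X *)
Definition ext (C : numClosedFieldType) (V X : {fset nat}) (A : Op C V) : Op C X :=
  \matrix_(i, j)
    (if [forall x : X, (val x \notin V) ==> (ev i x == ev j x)]
     then A (rk (rest V (ev i))) (rk (rest V (ev j))) else 0).
Arguments ext {C} V X A.

(* implicit extension E (x) id_{X \ V} of a super-operator E on L(H_V) to
   L(H_X): E acts on each (V-)block of rho indexed by the X\V-parts. *)
Definition sext (C : numClosedFieldType) (V X : {fset nat})
    (E : Op C V -> Op C V) (rho : Op C X) : Op C X :=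
  \matrix_(i, j)
    E (\matrix_(a, b) rho (rk (comb (ev a) (ev i))) (rk (comb (ev b) (ev j))))
      (rk (rest V (ev i))) (rk (rest V (ev j))).
Arguments sext {C} V X E rho.

Definition psd (C : numClosedFieldType) n (A : 'M[C]_n) : Prop :=
  forall x : 'cV[C]_n, 0 <= (hadj x *m A *m x) 0 0.
Definition pdens (C : numClosedFieldType) n (A : 'M[C]_n) : Prop :=
  psd A /\ \tr A <= 1.

(* DProg(V): completely positive, trace-nonincreasing super-operators
   (complete positivity = positivity of E (x) id on every finite
   register extension H_X, X containing V). *)
Definition is_DProg (C : numClosedFieldType) (V : {fset nat})
    (E : Op C V -> Op C V) : Prop :=
  [/\ (forall (a : C) (A B : Op C V), E (a *: A + B) = a *: E A + E B),
      (forall X : {fset nat}, (V `<=` X)%fset ->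
         forall rho : Op C X, psd rho -> psd (sext V X E rho)) &
      (forall rho : Op C V, psd rho -> \tr (E rho) <= \tr rho)].

Definition proj (C : numClosedFieldType) n (P : 'M[C]_n) : Prop :=
  P *m P = P /\ hadj P = P.
Definition img (C : numClosedFieldType) n (P : 'M[C]_n) (x : 'cV[C]_n) : Prop :=
  exists y : 'cV[C]_n, x = P *m y.
Definition sp_eq (C : numClosedFieldType) n (S T : 'cV[C]_n -> Prop) : Prop :=
  forall x, S x <-> T x.
Definition psub (C : numClosedFieldType) n (P P' : 'M[C]_n) : Prop :=
  forall x, img P x -> img P' x.

Definition fixsp (C : numClosedFieldType) n (A : 'M[C]_n) (x : 'cV[C]_n) : Prop :=
  A *m x = x.
Definition nullsp (C : numClosedFieldType) n (B : 'M[C]_n) (x : 'cV[C]_n) : Prop :=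
  (hadj x *m B *m x) 0 0 = 0.
Definition supp (C : numClosedFieldType) n (rho : 'M[C]_n) (x : 'cV[C]_n) : Prop :=
  exists (k : nat) (vs : 'I_k -> 'cV[C]_n) (cs : 'I_k -> C),
    (forall i, vs i != 0 /\ exists l : C, l != 0 /\ rho *m vs i = l *: vs i) /\
    x = \sum_(i < k) cs i *: vs i.

(* Hoare triples; P, Q are projectors on H_Y with Y = V `|` W (V = variables
   of the program, W = variables of the assertions); everything is extended
   to an arbitrary finite X containing Y. *)
Definition sat_tot (C : numClosedFieldType) (V W : {fset nat})
    (E : Op C V -> Op C V) (P Q : Op C (V `|` W)%fset) : Prop :=
  forall X : {fset nat}, (V `|` W `<=` X)%fset -> forall rho : Op C X, pdens rho ->
    \tr (ext (V `|` W)%fset X P *m rho) <= \tr (ext (V `|` W)%fset X Q *m sext V X E rho).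

Definition sat_par (C : numClosedFieldType) (V W : {fset nat})
    (E : Op C V -> Op C V) (P Q : Op C (V `|` W)%fset) : Prop :=
  forall X : {fset nat}, (V `|` W `<=` X)%fset -> forall rho : Op C X, pdens rho ->
    \tr (ext (V `|` W)%fset X P *m rho) <=
    \tr (ext (V `|` W)%fset X Q *m sext V X E rho) + \tr rho - \tr (sext V X E rho).

Definition largest_proj (C : numClosedFieldType) n (Pr : 'M[C]_n -> Prop)
    (P : 'M[C]_n) : Prop :=
  [/\ proj P, Pr P & forall P', proj P' -> Pr P' -> psub P' P].
Definition smallest_proj (C : numClosedFieldType) n (Pr : 'M[C]_n -> Prop)
    (P : 'M[C]_n) : Prop :=
  [/\ proj P, Pr P & forall P', proj P' -> Pr P' -> psub P P'].

(* Main.v *)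
Require Import Defs.
From HB Require Import structures.
From mathcomp Require Import all_boot all_order all_algebra.
From mathcomp Require Import finmap.
From mathcomp Require Import sesquilinear spectral ring.
Import Order.TTheory GRing.Theory Num.Theory.
Local Open Scope ring_scope.

Module Aux.
Set Implicit Arguments.
Unset Strict Implicit.
Unset Printing Implicit Defensive.
Local Open Scope ring_scope.
Lemma combE (V X : {fset nat}) (a : Bs V) (s : Bs X) (x : X) :
  comb a s x = if insub (val x) is Some v then a v else s x.
Proof. by rewrite ffunE; case: insub. Qed.

Lemma restE (V X : {fset nat}) (s : Bs X) (v : V) :
  rest V s v = if insub (val v) is Some x then s x else false.
Proof. by rewrite ffunE; case: insub. Qed.

Section Comb.
Variables (V X : {fset nat}).
Hypothesis VX : (V `<=` X)%fset.

Lemma rest_comb (a : Bs V) (s : Bs X) : rest V (comb a s) = a.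
Proof.
apply/ffunP => v; rewrite restE.
have vX : val v \in X by apply: (fsubsetP VX); exact: valP.
rewrite insubT combE /= insubT /=; first exact: valP.
by move=> h; congr (a _); apply: val_inj.
Qed.

Lemma comb_rest (s : Bs X) : comb (rest V s) s = s.
Proof.
apply/ffunP => x; rewrite combE.
case: insubP => // v _ vx; rewrite restE.
rewrite insubT /=; first by rewrite vx; exact: valP.
by move=> h; congr (s _); apply: val_inj => /=.
Qed.

Lemma comb_comb (a b : Bs V) (s : Bs X) : comb a (comb b s) = comb a s.
Proof.
apply/ffunP => x; rewrite !combE; case: insubP => //= _ _ _.
Qed.

Lemma comb_rest_comb (a : Bs V) (s : Bs X) : comb (rest V s) (comb a s) = s.
Proof. by rewrite comb_comb comb_rest. Qed.

Lemma comb_eq_rest (a b : Bs V) (s : Bs X) :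
  (comb a (comb b s) == s) = (rest V s == a).
Proof.
apply/eqP/eqP => [<-|<-]; first by rewrite rest_comb.
by rewrite comb_rest_comb.
Qed.

Definition agr (s t : Bs X) := [forall x : X, (val x \notin V) ==> (s x == t x)].

Lemma agrE (s t : Bs X) : agr s t = (s == comb (rest V s) t).
Proof.
apply/forallP/eqP => [H|->] .
  apply/ffunP => x; rewrite combE; case: insubP => [v _ vx|xV].
    rewrite restE insubT /=; first by rewrite vx; exact: valP.
    by move=> h; congr (s _); apply: val_inj.
  by move: (H x); rewrite xV => /eqP.
move=> x; apply/implyP => xV; rewrite combE insubF //; exact/negbTE.
Qed.

Lemma agr_comb (a : Bs V) (s t : Bs X) : agr (comb a s) t = agr s t.
Proof.
apply/forallP/forallP => H x; move: (H x); rewrite combE;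
  case: insubP => //= v _ vx; have xV : fsval x \in V by rewrite -vx; exact: fsvalP.
  all: by rewrite xV.
Qed.

Lemma agr_sym (s t : Bs X) : agr s t = agr t s.
Proof. by apply/forallP/forallP => H x; move: (H x); rewrite eq_sym. Qed.
End Comb.

Section Sums.
Variable R : zmodType.

Lemma sum_ord_bs (X : {fset nat}) (F : 'I_(Defs.dim X) -> R) :
  \sum_(i < Defs.dim X) F i = \sum_(s : Bs X) F (rk s).
Proof.
rewrite (reindex (@rk X)) //; exists (@ev X) => i _.
  by rewrite /ev /rk enum_rankK.
by rewrite /ev /rk enum_valK.
Qed.

Variables (V X : {fset nat}).
Hypothesis VX : (V `<=` X)%fset.

Lemma sum_agr (t : Bs X) (f : Bs X -> R) :
  \sum_(s : Bs X) (if agr V s t then f s else 0) = \sum_(a : Bs V) f (comb a t).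
Proof.
transitivity (\sum_(s : Bs X) \sum_(a : Bs V) (if s == comb a t then f s else 0)).
  apply: eq_bigr => s _.
  rewrite (bigD1 (rest V s)) //= big1 ?addr0; last first.
    move=> a /negbTE ne; case: eqP => // e; move: ne.
    by rewrite e rest_comb // eqxx.
  by rewrite agrE.
rewrite exchange_big /=; apply: eq_bigr => a _.
by rewrite (bigD1 (comb a t)) //= eqxx big1 ?addr0 // => s /negbTE ->.
Qed.

Lemma sum_rest_shift (a a' : Bs V) (h : Bs X -> R) :
  \sum_(r : Bs X | rest V r == a) h (comb a' r) =
  \sum_(r : Bs X | rest V r == a') h r.
Proof.
symmetry.
rewrite (reindex_onto (comb a') (comb a)) /=; last first.
  by move=> r /eqP <-; rewrite comb_rest_comb.
apply: eq_bigl => r; rewrite rest_comb // eqxx /=.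
by rewrite comb_eq_rest.
Qed.

Lemma sum_split (z : Bs V) (g : Bs X -> R) :
  \sum_(t : Bs X) g t = \sum_(r : Bs X | rest V r == z) \sum_(a : Bs V) g (comb a r).
Proof.
rewrite [RHS]exchange_big /=.
under [RHS]eq_bigr => a _ do rewrite (sum_rest_shift z a g).
by rewrite [LHS](partition_big (fun r => rest V r) predT).
Qed.

Lemma sum_invol (F : Bs X -> Bs V -> R) :
  \sum_(s : Bs X) \sum_(c : Bs V) F s c =
  \sum_(l : Bs X) \sum_(a : Bs V) F (comb a l) (rest V l).
Proof.
rewrite !pair_big /=.
rewrite (reindex (fun p : Bs X * Bs V => (comb p.2 p.1, rest V p.1))) //=.
exists (fun p : Bs X * Bs V => (comb p.2 p.1, rest V p.1)) => -[l a] _ /=;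
  by rewrite rest_comb // comb_rest_comb.
Qed.
End Sums.

Lemma insub_out (Z : {fset nat}) (n : nat) : n \notin Z -> (insub n : option Z) = None.
Proof. by move=> h; rewrite insubF //; apply/negbTE. Qed.

Section Nested.
Variables (V Y X : {fset nat}).
Hypotheses (VY : (V `<=` Y)%fset) (YX : (Y `<=` X)%fset).

Lemma rest_rest (r : Bs X) : rest V (rest Y r) = rest V r.
Proof.
apply/ffunP => v; rewrite !restE.
have vY : val v \in Y by apply: (fsubsetP VY); exact: valP.
have vX : val v \in X by apply: (fsubsetP YX).
by rewrite insubT /= restE /= insubT /=.
Qed.

Lemma comb_nested (d : Bs V) (b : Bs Y) (r : Bs X) :
  comb d (comb b r) = comb (comb d b) r.
Proof.
apply/ffunP => x; rewrite !combE.
case xV: (fsval x \in V).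
  have xY : fsval x \in Y by apply: (fsubsetP VY).
  by rewrite insubT /= (insubT (fun n => n \in Y) xY) /= combE /= insubT /=.
rewrite (insub_out (negbT xV)) /=.
case xY: (fsval x \in Y).
  by rewrite (insubT (fun n => n \in Y) xY) /= combE /= (insub_out (negbT xV)).
by rewrite (insub_out (negbT xY)).
Qed.
End Nested.


Section B.
Variable C : numClosedFieldType.

Lemma rkK (X : {fset nat}) (s : Bs X) : ev (rk s) = s.
Proof. by rewrite /ev /rk enum_rankK. Qed.
Lemma evK (X : {fset nat}) (i : 'I_(Defs.dim X)) : rk (ev i) = i.
Proof. by rewrite /ev /rk enum_valK. Qed.

Lemma tr_mul_bs (X : {fset nat}) (A B : Op C X) :
  \tr (A *m B) = \sum_(s : Bs X) \sum_(t : Bs X) A (rk s) (rk t) * B (rk t) (rk s).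
Proof.
rewrite /mxtrace sum_ord_bs; apply: eq_bigr => s _.
by rewrite mxE sum_ord_bs.
Qed.

Lemma tr_delta_mul n (i j : 'I_n) (A : 'M[C]_n) : \tr (delta_mx j i *m A) = A i j.
Proof.
rewrite /mxtrace (bigD1 j) //= big1 ?addr0.
  rewrite mxE (bigD1 i) //= big1 ?addr0 ?mxE ?eqxx ?mul1r //.
  by move=> k /negbTE nk; rewrite mxE nk andbF mul0r.
move=> k /negbTE nk; rewrite mxE big1 // => l _; rewrite mxE nk /= mul0r //.
Qed.

Definition linE n (E : 'M[C]_n -> 'M[C]_n) :=
  forall (a : C) (A B : 'M[C]_n), E (a *: A + B) = a *: E A + E B.

Lemma linE0 n (E : 'M[C]_n -> 'M[C]_n) : linE E -> E 0 = 0.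
Proof.
move=> L; have h := L 1 0 0; rewrite !scale1r addr0 in h.
by rewrite -{1}[E 0]addr0 in h; exact: esym (addrI _ h).
Qed.

Lemma linED n (E : 'M[C]_n -> 'M[C]_n) : linE E -> forall A B, E (A + B) = E A + E B.
Proof. by move=> L A B; have := L 1 A B; rewrite !scale1r. Qed.

Lemma linEZ n (E : 'M[C]_n -> 'M[C]_n) : linE E -> forall a A, E (a *: A) = a *: E A.
Proof. by move=> L a A; rewrite -[a *: A]addr0 L linE0 // addr0. Qed.

Lemma linE_sum n (E : 'M[C]_n -> 'M[C]_n) (I : Type) (r : seq I) (P : pred I) F :
  linE E -> E (\sum_(i <- r | P i) F i) = \sum_(i <- r | P i) E (F i).
Proof.
move=> L; elim/big_rec2: _ => [|i A B _ <-]; first exact: linE0.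
exact: linED.
Qed.

Lemma linE_kernel n (E : 'M[C]_n -> 'M[C]_n) (A : 'M[C]_n) p q : linE E ->
  E A p q = \sum_(c < n) \sum_(d < n) A c d * E (delta_mx c d) p q.
Proof.
move=> L; rewrite {1}(matrix_sum_delta A) linE_sum // summxE.
apply: eq_bigr => c _; rewrite linE_sum // summxE; apply: eq_bigr => d _.
by rewrite linEZ // mxE.
Qed.

Lemma dual_entry n (E Ed : 'M[C]_n -> 'M[C]_n) (B : 'M[C]_n) i j :
  (forall A B, \tr (E A *m B) = \tr (A *m Ed B)) ->
  Ed B i j = \sum_(a < n) \sum_(b < n) E (delta_mx j i) a b * B b a.
Proof.
move=> D; rewrite -tr_delta_mul -D /mxtrace.
by apply: eq_bigr => a _; rewrite mxE.
Qed.
End B.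

Lemma swap4 (R : zmodType) (I1 I2 I3 I4 : finType) (F : I1 -> I2 -> I3 -> I4 -> R) :
  \sum_(i : I1) \sum_(j : I2) \sum_(k : I3) \sum_(l : I4) F i j k l =
  \sum_(k : I3) \sum_(l : I4) \sum_(i : I1) \sum_(j : I2) F i j k l.
Proof.
transitivity (\sum_(i : I1) \sum_(j : I2) \sum_(p : I3 * I4) F i j p.1 p.2).
  by apply: eq_bigr => i _; apply: eq_bigr => j _; rewrite pair_big.
rewrite [LHS]pair_big exchange_big [RHS]pair_big /=.
by apply: eq_bigr => p _; rewrite [RHS]pair_big.
Qed.

Section Sext.
Variable C : numClosedFieldType.
Variables (V X : {fset nat}).
Hypothesis VX : (V `<=` X)%fset.
Variables (E Ed : Op C V -> Op C V).
Hypothesis L : linE E.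
Hypothesis D : forall A B, \tr (E A *m B) = \tr (A *m Ed B).

Definition K (c d p q : Bs V) := E (delta_mx (rk c) (rk d)) (rk p) (rk q).

Lemma sext_kernel (rho : Op C X) s t :
  sext V X E rho (rk s) (rk t) =
  \sum_(c : Bs V) \sum_(d : Bs V) rho (rk (comb c s)) (rk (comb d t)) * K c d (rest V s) (rest V t).
Proof.
rewrite mxE !rkK linE_kernel // sum_ord_bs; apply: eq_bigr => c _.
rewrite sum_ord_bs; apply: eq_bigr => d _.
by rewrite mxE !rkK.
Qed.

Lemma sextdag_entry (M : Op C X) k l :
  sext V X Ed M (rk k) (rk l) =
  \sum_(a : Bs V) \sum_(b : Bs V) K (rest V l) (rest V k) a b * M (rk (comb b k)) (rk (comb a l)).
Proof.
rewrite mxE !rkK (dual_entry _ _ _ D) sum_ord_bs; apply: eq_bigr => a _.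
rewrite sum_ord_bs; apply: eq_bigr => b _.
by rewrite mxE !rkK.
Qed.

Lemma sext_dual (M rho : Op C X) :
  \tr (M *m sext V X E rho) = \tr (sext V X Ed M *m rho).
Proof.
rewrite !tr_mul_bs.
pose f u v c d := M (rk u) (rk v) * (rho (rk (comb c v)) (rk (comb d u)) * K c d (rest V v) (rest V u)).
transitivity (\sum_(u : Bs X) \sum_(d : Bs V) \sum_(v : Bs X) \sum_(c : Bs V) f u v c d).
  apply: eq_bigr => u _.
  transitivity (\sum_(v : Bs X) \sum_(c : Bs V) \sum_(d : Bs V) f u v c d).
    apply: eq_bigr => v _; rewrite sext_kernel big_distrr /=.
    by apply: eq_bigr => c _; rewrite big_distrr.
  transitivity (\sum_(v : Bs X) \sum_(d : Bs V) \sum_(c : Bs V) f u v c d).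
    by apply: eq_bigr => v _; rewrite exchange_big.
  by rewrite exchange_big.
transitivity (\sum_(u : Bs X) \sum_(d : Bs V) \sum_(l : Bs X) \sum_(a : Bs V) f u (comb a l) (rest V l) d).
  by apply: eq_bigr => u _; apply: eq_bigr => d _; rewrite sum_invol.
transitivity (\sum_(l : Bs X) \sum_(a : Bs V) \sum_(u : Bs X) \sum_(d : Bs V) f u (comb a l) (rest V l) d).
  exact: swap4.
transitivity (\sum_(l : Bs X) \sum_(a : Bs V) \sum_(k : Bs X) \sum_(b : Bs V) f (comb b k) (comb a l) (rest V l) (rest V k)).
  by apply: eq_bigr => l _; apply: eq_bigr => a _; rewrite sum_invol.
transitivity (\sum_(l : Bs X) \sum_(k : Bs X) \sum_(a : Bs V) \sum_(b : Bs V) f (comb b k) (comb a l) (rest V l) (rest V k)).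
  by apply: eq_bigr => l _; rewrite exchange_big.
rewrite exchange_big; apply: eq_bigr => k _.
apply: eq_bigr => l _.
rewrite sextdag_entry big_distrl /=; apply: eq_bigr => a _.
rewrite big_distrl /=; apply: eq_bigr => b _.
rewrite /f !rest_comb // !comb_rest_comb //.
by rewrite [_ * K _ _ _ _]mulrC mulrA [M _ _ * _]mulrC.
Qed.
End Sext.


Section Ptr.
Variable C : numClosedFieldType.

Definition ptr (Y X : {fset nat}) (rho : Op C X) : Op C Y :=
  \matrix_(i, j) \sum_(r : Bs X | rest Y r == ev i) rho (rk r) (rk (comb (ev j) r)).

Lemma ptrE (Y X : {fset nat}) (rho : Op C X) a b :
  ptr Y rho (rk a) (rk b) = \sum_(r : Bs X | rest Y r == a) rho (rk r) (rk (comb b r)).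
Proof. by rewrite mxE !rkK. Qed.

Lemma collapse (Y X : {fset nat}) (G : Bs X -> Bs Y -> C) :
  \sum_(b : Bs Y) \sum_(r : Bs X | rest Y r == b) G r b = \sum_(r : Bs X) G r (rest Y r).
Proof.
under eq_bigr => b _ do rewrite big_mkcond /=.
rewrite exchange_big /=; apply: eq_bigr => r _.
rewrite (bigD1 (rest Y r)) //= eqxx big1 ?addr0 // => b /negbTE nb.
by rewrite eq_sym nb.
Qed.

Lemma extE (Y X : {fset nat}) (M : Op C Y) s t :
  ext Y X M (rk s) (rk t) = if agr Y s t then M (rk (rest Y s)) (rk (rest Y t)) else 0.
Proof. by rewrite mxE !rkK. Qed.

Lemma ext_id (Y : {fset nat}) (M : Op C Y) : ext Y Y M = M.
Proof.
have rY : forall s : Bs Y, rest Y s = s.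
  move=> s; apply/ffunP => v; rewrite restE insubT /=; first exact: valP.
  by move=> h; congr (s _); apply: val_inj.
apply/matrixP => i j; rewrite mxE !rY !evK.
suff -> : [forall x : Y, (val x \notin Y) ==> (ev i x == ev j x)] by [].
by apply/forallP => x; rewrite (valP x).
Qed.

Lemma sext_id (V : {fset nat}) (E : Op C V -> Op C V) rho : sext V V E rho = E rho.
Proof.
have cV : forall a s : Bs V, comb a s = a.
  move=> a s; apply/ffunP => v; rewrite combE insubT /=; first exact: valP.
  by move=> h; congr (a _); apply: val_inj.
have rY : forall s : Bs V, rest V s = s.
  move=> s; apply/ffunP => v; rewrite restE insubT /=; first exact: valP.
  by move=> h; congr (s _); apply: val_inj.
apply/matrixP => i j; rewrite mxE !rY !evK; congr (E _ _ _).
by apply/matrixP => a b; rewrite mxE !cV !evK.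
Qed.

Lemma qformE n (A : 'M[C]_n) (x : 'cV[C]_n) :
  (hadj x *m A *m x) 0 0 = \sum_i \sum_j (x i 0)^* * A i j * x j 0.
Proof.
rewrite mxE.
transitivity (\sum_j \sum_i (x i 0)^* * A i j * x j 0); last by rewrite exchange_big.
apply: eq_bigr => j _; rewrite mxE big_distrl /=.
by apply: eq_bigr => i _; rewrite !mxE.
Qed.

Section PtrLemmas.
Variables (Y X : {fset nat}).
Hypothesis YX : (Y `<=` X)%fset.

Lemma tr_ext (M : Op C Y) (rho : Op C X) :
  \tr (ext Y X M *m rho) = \tr (M *m ptr Y rho).
Proof.
rewrite !tr_mul_bs exchange_big /=.
transitivity (\sum_(t : Bs X) \sum_(a : Bs Y) M (rk a) (rk (rest Y t)) * rho (rk t) (rk (comb a t))).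
  apply: eq_bigr => t _.
  pose f := (fun s => M (rk (rest Y s)) (rk (rest Y t)) * rho (rk t) (rk s)).
  transitivity (\sum_(a : Bs Y) f (comb a t)); last first.
    by apply: eq_bigr => a _; rewrite /f rest_comb.
  rewrite -sum_agr //.
  apply: eq_bigr => s _; rewrite extE; case: ifP => _ //; by rewrite mul0r.
rewrite exchange_big /=; apply: eq_bigr => a _.
rewrite -(collapse (fun t b => M (rk a) (rk b) * rho (rk t) (rk (comb a t)))).
apply: eq_bigr => b _.
by rewrite ptrE big_distrr.
Qed.

Lemma tr_ptr (rho : Op C X) : \tr (ptr Y rho) = \tr rho.
Proof.
rewrite /mxtrace !sum_ord_bs.
under eq_bigr => a _ do rewrite ptrE.
by rewrite collapse; apply: eq_bigr => r _; rewrite comb_rest.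
Qed.

Lemma psd_ptr (rho : Op C X) : psd rho -> psd (ptr Y rho).
Proof.
move=> P x; rewrite qformE.
pose xb (a : Bs Y) := x (rk a) 0.
pose z : Bs Y := [ffun => false].
pose y (r : Bs X) : 'cV[C]_(Defs.dim X) :=
  \col_i (if agr Y (ev i) r then xb (rest Y (ev i)) else 0).
have Hy : forall r, (hadj (y r) *m rho *m y r) 0 0 =
   \sum_(a : Bs Y) \sum_(b : Bs Y) (xb a)^* * rho (rk (comb a r)) (rk (comb b r)) * xb b.
  move=> r; rewrite qformE sum_ord_bs.
  transitivity (\sum_(s : Bs X) if agr Y s r then
     \sum_(t : Bs X) (if agr Y t r then (xb (rest Y s))^* * rho (rk s) (rk t) * xb (rest Y t) else 0) else 0).
    apply: eq_bigr => s _; rewrite sum_ord_bs.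
    case: ifP => hs; last by apply: big1 => t _; rewrite !mxE rkK hs rmorph0 !mul0r.
    apply: eq_bigr => t _; rewrite !mxE !rkK hs.
    by case: ifP => // _; rewrite mulr0.
  rewrite (sum_agr YX r (fun s => \sum_(t : Bs X) (if agr Y t r then (xb (rest Y s))^* * rho (rk s) (rk t) * xb (rest Y t) else 0))).
  apply: eq_bigr => a _; rewrite (sum_agr YX r (fun t => (xb (rest Y (comb a r)))^* * rho (rk (comb a r)) (rk t) * xb (rest Y t))).
  by apply: eq_bigr => b _; rewrite !rest_comb.
suff -> : \sum_i \sum_j (x i 0)^* * ptr Y rho i j * x j 0 =
  \sum_(r : Bs X | rest Y r == z) (hadj (y r) *m rho *m y r) 0 0.
  by apply: sumr_ge0 => r _; apply: P.
under [RHS]eq_bigr => r _ do rewrite Hy.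
rewrite sum_ord_bs [RHS]exchange_big /=; apply: eq_bigr => a _.
rewrite sum_ord_bs [RHS]exchange_big /=; apply: eq_bigr => b _.
rewrite ptrE mulr_sumr mulr_suml.
rewrite -(sum_rest_shift YX z a (fun r => (xb a)^* * rho (rk r) (rk (comb b r)) * xb b)).
by apply: eq_bigr => r _; rewrite comb_comb.
Qed.
End PtrLemmas.

Lemma matrix_bsP (X : {fset nat}) (A B : Op C X) :
  (forall s t, A (rk s) (rk t) = B (rk s) (rk t)) -> A = B.
Proof. by move=> H; apply/matrixP => i j; rewrite -(evK i) -(evK j) H. Qed.

Lemma ptr_sext (V Y X : {fset nat}) (VY : (V `<=` Y)%fset) (YX : (Y `<=` X)%fset)
  (E : Op C V -> Op C V) (L : linE E) (rho : Op C X) :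
  ptr Y (sext V X E rho) = sext V Y E (ptr Y rho).
Proof.
have VX : (V `<=` X)%fset by apply: fsubset_trans YX.
apply: matrix_bsP => a b.
rewrite ptrE sext_kernel //.
under eq_bigr => r _ do rewrite sext_kernel //.
rewrite exchange_big /=; apply: eq_bigr => c _.
rewrite exchange_big /=; apply: eq_bigr => d _.
rewrite ptrE big_distrl /=.
pose h r := rho (rk r) (rk (comb (comb d b) r)) * K E c d (rest V a) (rest V b).
rewrite -(sum_rest_shift YX a (comb c a) h).
apply: eq_bigr => r /eqP ra; rewrite /h.
have e1 : rest V r = rest V a by rewrite -ra rest_rest.
have e2 : rest V (comb b r) = rest V b by rewrite -(rest_rest VY YX) rest_comb.
have e3 : comb c r = comb (comb c a) r by rewrite -(comb_nested VY) -ra comb_rest.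
rewrite e1 e2 e3 (comb_nested VY) comb_comb //.
Qed.
End Ptr.

Section ExtProj.
Variable C : numClosedFieldType.
Variables (W Y : {fset nat}).
Hypothesis WY : (W `<=` Y)%fset.

Lemma ext_mul (A B : Op C W) : ext W Y A *m ext W Y B = ext W Y (A *m B).
Proof.
apply: matrix_bsP => s t; rewrite mxE sum_ord_bs.
pose f u := A (rk (rest W s)) (rk (rest W u)) * ext W Y B (rk u) (rk t).
transitivity (\sum_(u : Bs Y) if agr W u s then f u else 0).
  apply: eq_bigr => u _; rewrite (extE A s u) agr_sym.
  by case: ifP => _ //; rewrite mul0r.
rewrite (sum_agr WY s f) extE.
case: ifP => hst.
  rewrite mxE sum_ord_bs; apply: eq_bigr => a _.
  by rewrite /f extE agr_comb // hst !rest_comb.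
by apply: big1 => a _; rewrite /f extE agr_comb // hst mulr0.
Qed.

Lemma hadj_ext (A : Op C W) : hadj (ext W Y A) = ext W Y (hadj A).
Proof.
apply: matrix_bsP => s t; rewrite !mxE !rkK.
rewrite -/(agr W s t) -/(agr W t s) agr_sym.
by case: ifP => _; rewrite ?rmorph0 // !mxE.
Qed.

Lemma proj_ext (Q : Op C W) : proj Q -> proj (ext W Y Q).
Proof. by move=> [H1 H2]; split; rewrite ?ext_mul ?hadj_ext ?H1 ?H2. Qed.
End ExtProj.

Local Open Scope sesquilinear_scope.

Section Lin.
Variable C : numClosedFieldType.

Lemma hadjE m n (A : 'M[C]_(m, n)) : hadj A = A ^t*.
Proof. by []. Qed.

Lemma hadj_mul m n p (A : 'M[C]_(m, n)) (B : 'M[C]_(n, p)) :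
  hadj (A *m B) = hadj B *m hadj A.
Proof. by rewrite !hadjE trmx_mul map_mxM. Qed.

Lemma hadjK m n (A : 'M[C]_(m, n)) : hadj (hadj A) = A.
Proof. by rewrite !hadjE trmxCK. Qed.

Lemma hadjD m n (A B : 'M[C]_(m, n)) : hadj (A + B) = hadj A + hadj B.
Proof. by rewrite !hadjE linearD /= map_mxD. Qed.

Lemma hadjN m n (A : 'M[C]_(m, n)) : hadj (- A) = - hadj A.
Proof. by rewrite !hadjE linearN /= map_mxN. Qed.

Lemma hadjB m n (A B : 'M[C]_(m, n)) : hadj (A - B) = hadj A - hadj B.
Proof. by rewrite hadjD hadjN. Qed.

Lemma hadjZ m n (c : C) (A : 'M[C]_(m, n)) : hadj (c *: A) = c^* *: hadj A.
Proof. by rewrite !hadjE linearZ /= map_mxZ. Qed.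

Lemma hadj1 n : hadj (1%:M : 'M[C]_n) = 1%:M.
Proof. by rewrite hadjE trmx1 map_mx1. Qed.

Lemma hadj0 m n : hadj (0 : 'M[C]_(m, n)) = 0.
Proof. by rewrite hadjE trmx0 map_mx0. Qed.

Lemma hadjE_entry m n (A : 'M[C]_(m, n)) i j : hadj A i j = (A j i)^*.
Proof. by rewrite !mxE. Qed.
End Lin.

Section Psd.
Variable C : numClosedFieldType.
Variable n : nat.
Implicit Types (A B : 'M[C]_n) (x y : 'cV[C]_n).

Definition bf A x y := (hadj x *m A *m y) 0 0.

Lemma maddE m p (M N : 'M[C]_(m, p)) i j : (M + N) i j = M i j + N i j.
Proof. by rewrite mxE. Qed.
Lemma mscaleE m p a (M : 'M[C]_(m, p)) i j : (a *: M) i j = a * M i j.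
Proof. by rewrite mxE. Qed.

Lemma bf_expand A x y c :
  bf A (x + c *: y) (x + c *: y) = bf A x x + c * bf A x y + c^* * bf A y x + c^* * c * bf A y y.
Proof.
rewrite /bf hadjD hadjZ !mulmxDl !mulmxDr -?scalemxAl ?scalemxAr -?scalemxAl ?scalemxAr.
rewrite !maddE -!scalemxAr !mscaleE. ring.
Qed.

Lemma hadj_delta i : hadj (delta_mx i 0 : 'cV[C]_n) = delta_mx 0 i.
Proof.
apply/matrixP => k l; rewrite !mxE.
by case: (k == 0); case: (l == i); rewrite /= ?conjC0 ?conjC1.
Qed.

Lemma bf_conj A : hadj A = A -> forall x y, bf A x y = (bf A y x)^*.
Proof.
move=> hA x y; rewrite /bf -hadjE_entry !hadj_mul hadjK hA.
by rewrite mulmxA.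
Qed.

Lemma bf_delta A i j : bf A (delta_mx i 0) (delta_mx j 0) = A i j.
Proof.
rewrite /bf; have -> : hadj (delta_mx i 0 : 'cV[C]_n) = delta_mx 0 i.
  apply/matrixP => k l; rewrite !mxE.
  by case: (k == 0); case: (l == i); rewrite /= ?conjC0 ?conjC1.
by rewrite -rowE -colE !mxE.
Qed.

Lemma psd_herm A : psd A -> hadj A = A.
Proof.
move=> P.
have R : forall x, (bf A x x)^* = bf A x x.
  by move=> x; apply: conj_Creal; apply: ger0_real; apply: P.
have key : forall x y, bf A x y = (bf A y x)^*.
  move=> x y; have h1 := R (x + 1 *: y); have h2 := R (x + 'i *: y).
  rewrite bf_expand in h1; rewrite bf_expand in h2.
  rewrite !rmorphD !rmorphM /= ?conjCK ?conjCi ?conjC1 ?rmorphN /= (R x) (R y) in h1 h2.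
  rewrite ?conjCK ?conjCi ?conjC1 in h1 h2.
  move: h1 h2; set p := bf A x y; set q := bf A y x; set a := bf A x x; set b := bf A y y.
  move=> h1 h2.
  have e1 : p^* + q^* - p - q = 0.
    transitivity ((a + 1 * p^* + 1 * q^* + 1 * 1 * b) - (a + 1 * p + 1 * q + 1 * 1 * b)); first by ring.
    by rewrite h1 subrr.
  have e2 : 'i * (q^* - p^* - p + q) = 0.
    transitivity ((a + - 'i * p^* + 'i * q^* + 'i * - 'i * b) - (a + 'i * p + - 'i * q + - 'i * 'i * b)); first by ring.
    by rewrite h2 subrr.
  move/eqP: e2; rewrite mulf_eq0 (negbTE (@neq0Ci C)) /= => /eqP e2.
  have e3 : 2%:R * (q^* - p) = 0.
    transitivity ((p^* + q^* - p - q) + (q^* - p^* - p + q)); first by ring.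
    by rewrite e1 e2 addr0.
  move/eqP: e3; rewrite mulf_eq0 pnatr_eq0 /= subr_eq0 => /eqP.
  by move=> ->.
apply/matrixP => i j; rewrite hadjE_entry -!bf_delta.
by rewrite [RHS]key.
Qed.

Lemma scalar_aux (w beta : C) : 0 <= beta ->
  (forall c : C, 0 <= c * w^* + c^* * w + c^* * c * beta) -> w = 0.
Proof.
move=> b0 H.
have b1 : 0 < beta + 1 by rewrite ltr_wpDl.
set t := (beta + 1)^-1.
have t0 : 0 < t by rewrite invr_gt0.
have tr : t^* = t by apply: conj_Creal; apply: ger0_real; apply: ltW.
have tb : t * (beta + 1) = 1 by rewrite mulVf // gt_eqF.
have := H (- (t * w)); rewrite rmorphN rmorphM /= tr.
set N := w * w^*.
have -> : - (t * w) * w^* + - (t * w^*) * w + - (t * w^*) * - (t * w) * beta =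
   - ((t * t * (beta + 2%:R)) * N) + 2%:R * t * N * (t * (beta + 1) - 1).
  by rewrite /N; ring.
rewrite tb subrr mulr0 addr0 oppr_ge0 pmulr_rle0; last first.
  by rewrite !mulr_gt0 // ltr_wpDl.
move=> hN; have : N = 0 by apply/le_anti; rewrite hN mul_conjC_ge0.
by move/eqP; rewrite mul_conjC_eq0 => /eqP.
Qed.

Lemma psd_null A x : psd A -> bf A x x = 0 -> A *m x = 0.
Proof.
move=> P hx; have hA := psd_herm P.
apply/colP => k; rewrite [RHS]mxE.
pose y : 'cV[C]_n := delta_mx k 0.
have hw : bf A y x = (A *m x) k 0.
  by rewrite /bf /y hadj_delta -mulmxA -rowE mxE.
rewrite -hw; apply: (@scalar_aux _ (bf A y y)); first exact: P.
move=> c; have := P (x + c *: y); rewrite -/(bf A _ _) bf_expand hx add0r.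
by rewrite (bf_conj hA x y).
Qed.

Lemma bf_tr A x : bf A x x = \tr (A *m (x *m hadj x)).
Proof. by rewrite /bf mulmxA mxtrace_mulC trace_mx11 mulmxA. Qed.

Lemma psd_diag A i : psd A -> 0 <= A i i.
Proof. by move=> P; rewrite -bf_delta; apply: P. Qed.

Lemma psd_tr_ge0 A : psd A -> 0 <= \tr A.
Proof. by move=> P; apply: sumr_ge0 => i _; apply: psd_diag. Qed.

Lemma psd_add A B : psd A -> psd B -> psd (A + B).
Proof.
by move=> PA PB x; rewrite mulmxDr mulmxDl maddE addr_ge0.
Qed.

Lemma psd_tr0 A : psd A -> \tr A = 0 -> A = 0.
Proof.
move=> P /eqP; rewrite psumr_eq0 => [/allP H|i _]; last exact: psd_diag.
apply/matrixP => i j; rewrite [RHS]mxE.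
have : A *m (delta_mx j 0 : 'cV[C]_n) = 0.
  apply: psd_null => //; rewrite bf_delta.
  by apply/eqP; apply: (H j); rewrite mem_index_enum.
by rewrite -colE => /colP /(_ i); rewrite !mxE.
Qed.
End Psd.

Lemma psd_cong (C : numClosedFieldType) m n (A : 'M[C]_m) (B : 'M[C]_(m, n)) :
  psd A -> psd (hadj B *m A *m B).
Proof.
by move=> P x; rewrite (_ : hadj x *m _ *m x = hadj (B *m x) *m A *m (B *m x)) // hadj_mul !mulmxA.
Qed.

Lemma psd1 (C : numClosedFieldType) n : psd (1%:M : 'M[C]_n).
Proof.
move=> x; rewrite mulmx1 mxE; apply: sumr_ge0 => i _.
by rewrite hadjE_entry mulrC mul_conjC_ge0.
Qed.

Lemma psd_xx (C : numClosedFieldType) n (x : 'cV[C]_n) : psd (x *m hadj x).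
Proof. by have := psd_cong (hadj x) (@psd1 C 1); rewrite hadjK mulmx1. Qed.

Lemma proj_psd (C : numClosedFieldType) n (P : 'M[C]_n) : proj P -> psd P.
Proof.
case=> h1 h2; have := psd_cong P (@psd1 C n).
by rewrite mulmx1 h2 h1.
Qed.

Lemma proj_compl (C : numClosedFieldType) n (P : 'M[C]_n) : proj P -> proj (1%:M - P).
Proof.
case=> h1 h2; split; last by rewrite hadjB hadj1 h2.
by rewrite mulmxBl !mulmxBr !mul1mx ?mulmx1 h1 subrr subr0.
Qed.

Lemma psd_tr0_proj (C : numClosedFieldType) n (K P : 'M[C]_n) :
  psd K -> proj P -> \tr (K *m P) = 0 -> K *m P = 0.
Proof.
move=> PK [h1 h2] t0.
have h : hadj P *m K *m P = 0.
  apply: psd_tr0; first exact: psd_cong.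
  by rewrite h2 -mulmxA mxtrace_mulC -mulmxA h1.
apply/matrixP => i j; rewrite [RHS]mxE.
have : K *m (P *m (delta_mx j 0 : 'cV[C]_n)) = 0.
  apply: psd_null => //; rewrite /bf hadj_mul !mulmxA.
  by rewrite -(mulmxA _ (hadj P)) -(mulmxA _ (hadj P *m K)) h mulmx0 mul0mx mxE.
by rewrite mulmxA -colE => /colP /(_ i); rewrite !mxE.
Qed.


Section Spec.
Variable C : numClosedFieldType.
Variable n : nat.
Implicit Types (A B : 'M[C]_n) (x y : 'cV[C]_n).

Lemma herm_normal A : hadj A = A -> A \is normalmx.
Proof. by move=> h; apply/normalmxP; rewrite -hadjE h. Qed.

Lemma spec_dec A : hadj A = A ->
  let U := spectralmx A in
  [/\ A = hadj U *m diag_mx (spectral_diag A) *m U, U *m hadj U = 1%:M & hadj U *m U = 1%:M].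
Proof.
move=> h U; have Uu : U \is unitarymx by apply: spectral_unitarymx.
have UU : U *m hadj U = 1%:M by apply/unitarymxP.
split => //.
  by rewrite hadjE -invmx_unitary //; apply/orthomx_spectralP/herm_normal.
by rewrite hadjE -invmx_unitary // mulVmx // unitarymx_unit.
Qed.

Lemma trpos A B : psd A -> psd B -> 0 <= \tr (A *m B).
Proof.
move=> PA PB; have hB := psd_herm PB.
have [eB UU _] := spec_dec hB.
set U := spectralmx B in eB UU; set d := spectral_diag B in eB.
have -> : \tr (A *m B) = \tr ((U *m A *m hadj U) *m diag_mx d).
  rewrite {1}eB !mulmxA mxtrace_mulC !mulmxA.
  by rewrite -[U *m A *m hadj U *m diag_mx d]mulmxA.
have hd : U *m B *m hadj U = diag_mx d.
  by rewrite eB !mulmxA UU mul1mx -mulmxA UU mulmx1.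
rewrite mul_mx_diag /mxtrace; apply: sumr_ge0 => i _; rewrite mxE.
apply: mulr_ge0.
  by apply: psd_diag; rewrite -{1}(hadjK U); apply: psd_cong.
have := psd_diag i (psd_cong (hadj U) PB); rewrite hadjK hd mxE eqxx mulr1n.
by [].
Qed.

Lemma projex k (Um : 'M[C]_(k, n)) :
  exists P : 'M[C]_n, proj P /\ forall x, img P x <-> (x^T <= Um)%MS.
Proof.
pose B := schmidt (row_base Um).
have Bu : B \is unitarymx by apply: schmidt_unitarymx; exact: rank_leq_col.
have BU : (B :=: Um)%MS.
  by apply: eqmx_trans (eq_row_base Um); apply: eqmx_schmidt_free; exact: row_base_free.
pose Bc := map_mx Num.conj B.
have hBc : hadj Bc = B^T by apply/matrixP=> i j; rewrite !mxE conjCK.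
have BB : Bc *m hadj Bc = 1%:M.
  have e := unitarymxP Bu; rewrite hBc.
  have -> : Bc *m B^T = map_mx Num.conj (B *m B ^t*).
    rewrite map_mxM; congr (_ *m _); apply/matrixP => i j; rewrite !mxE.
    exact: (esym (conjCK _)).
  have e' := congr1 (map_mx Num.conj) e; rewrite map_mx1 in e'; exact: e'.
exists (hadj Bc *m Bc); split.
  split; first by rewrite mulmxA -(mulmxA _ Bc) BB mulmx1.
  by rewrite hadj_mul hadjK.
move=> x; split.
  case=> y ->; rewrite hBc !trmx_mul trmxK mulmxA -BU.
  exact: submxMl.
move=> xU; have /submxP [z ez] : (x^T <= B)%MS by rewrite BU.
exists x.
have -> : x = hadj Bc *m z^T.
  by rewrite hBc -trmx_mul -ez trmxK.
by rewrite -mulmxA (mulmxA Bc) BB mul1mx.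
Qed.

Lemma col_expand m (M : 'M[C]_(m, n)) (z : 'cV[C]_n) :
  M *m z = \sum_i z i 0 *: (M *m delta_mx i 0).
Proof.
rewrite {1}(matrix_sum_delta z) mulmx_sumr; apply: eq_bigr => i _.
by rewrite big_ord1 -scalemxAr.
Qed.

Lemma diag_delta (d : 'rV[C]_n) i : diag_mx d *m (delta_mx i 0 : 'cV[C]_n) = d 0 i *: delta_mx i 0.
Proof.
rewrite mul_diag_mx; apply/matrixP => k l; rewrite !mxE.
by case: eqP => [->|_]; rewrite ?mulr0.
Qed.

Lemma supp_range rho : psd rho -> forall x, (exists y, x = rho *m y) <-> supp rho x.
Proof.
move=> P x; split; last first.
  case=> k [vs [cs [Hv ->]]].
  apply: (big_ind (fun S => exists y, S = rho *m y)).
  - by exists 0; rewrite mulmx0.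
  - by move=> _ _ [y1 ->] [y2 ->]; exists (y1 + y2); rewrite mulmxDr.
  move=> i _; have [_ [l [l0 hl]]] := Hv i.
  exists (cs i *: (l^-1 *: vs i)); rewrite -!scalemxAr hl !scalerA -mulrA mulVf // mulr1.
  by [].
case=> y ->.
have hr := psd_herm P; have [er UU UhU] := spec_dec hr.
set U := spectralmx rho in er UU UhU; set d := spectral_diag rho in er.
pose v i := hadj U *m (delta_mx i 0 : 'cV[C]_n).
have ev : forall i, rho *m v i = d 0 i *: v i.
  move=> i; rewrite /v er -!mulmxA (mulmxA U) UU mul1mx diag_delta.
  by rewrite -scalemxAr.
have v0 : forall i, v i != 0.
  move=> i; apply/negP => /eqP h.
  have : U *m v i = 0 by rewrite h mulmx0.
  rewrite /v mulmxA UU mul1mx => /matrixP /(_ i 0); rewrite !mxE !eqxx /=.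
  by move/eqP; rewrite oner_eq0.
have ex : rho *m y = \sum_i (d 0 i * (U *m y) i 0) *: v i.
  rewrite er -!mulmxA col_expand; apply: eq_bigr => i _.
  by rewrite mul_diag_mx mxE.
rewrite ex.
case: (pickP (fun i => d 0 i != 0)) => [i0 hi0|hn].
  exists n, (fun i => if d 0 i != 0 then v i else v i0),
    (fun i => if d 0 i != 0 then d 0 i * (U *m y) i 0 else 0); split.
    move=> i; case: ifP => hi; split => //; [exists (d 0 i) | exists (d 0 i0)]; split => //.
  apply: eq_bigr => i _; case: ifP => // /negbFE /eqP ->.
  by rewrite mul0r !scale0r.
exists 0, (fun _ => 0), (fun _ => 0); split; first by case.
rewrite big_ord0 big1 // => i _.
by move: (hn i) => /negbFE /eqP ->; rewrite mul0r scale0r.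
Qed.
End Spec.


Section Main.
Variable C : numClosedFieldType.
Variable n : nat.
Implicit Types (A M P T : 'M[C]_n) (x y : 'cV[C]_n).

Lemma moppE m p (M : 'M[C]_(m, p)) i j : (- M) i j = - M i j.
Proof. by rewrite mxE. Qed.

Lemma trB A M : \tr (A - M) = \tr A - \tr M.
Proof. by rewrite mxtraceD -scaleN1r mxtraceZ mulN1r. Qed.

Lemma tr_scaleR A c M : \tr (A *m (c *: M)) = c * \tr (A *m M).
Proof. by rewrite -scalemxAr mxtraceZ. Qed.

Lemma psd_scale c A : 0 <= c -> psd A -> psd (c *: A).
Proof. by move=> c0 P x; rewrite -scalemxAr -scalemxAl mscaleE mulr_ge0. Qed.

Lemma pdens_scale A : psd A -> exists2 c : C, 0 < c & pdens (c *: A).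
Proof.
move=> P; have t0 := psd_tr_ge0 P.
have b1 : 0 < 1 + \tr A by rewrite ltr_pwDl.
exists (1 + \tr A)^-1; first by rewrite invr_gt0.
split; first by apply: psd_scale => //; rewrite invr_ge0 ltW.
rewrite mxtraceZ ler_pdivrMl // mulr1.
by rewrite lerDr.
Qed.

Lemma mx_ext m (A M : 'M[C]_(m, n)) : (forall y, A *m y = M *m y) -> A = M.
Proof.
move=> H; apply/matrixP => i j.
by have /colP /(_ i) := H (delta_mx j 0); rewrite -!colE !mxE.
Qed.

Lemma img_fix P x : proj P -> img P x -> P *m x = x.
Proof. by case=> h1 _ [y ->]; rewrite mulmxA h1. Qed.

Lemma gen_fix T P : psd T -> psd (1%:M - T) -> proj P ->
  (forall x, img P x <-> T *m x = x) ->
  (forall sigma, psd sigma -> \tr (P *m sigma) <= \tr (T *m sigma)) /\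
  (forall P', proj P' -> (forall sigma, pdens sigma -> \tr (P' *m sigma) <= \tr (T *m sigma)) ->
     psub P' P).
Proof.
move=> PT P1T Pp H; have hT := psd_herm PT.
have [h1 h2] := Pp.
have TP : T *m P = P.
  by apply: mx_ext => y; rewrite -mulmxA; apply/H; exists y.
have PT' : P *m T = P by rewrite -h2 -hT -hadj_mul TP.
split.
  move=> sigma Ps; rewrite -subr_ge0 -trB -mulmxBl.
  apply: trpos => //.
  have -> : T - P = hadj (1%:M - P) *m T *m (1%:M - P).
    rewrite hadjB hadj1 h2 mulmxBl mul1mx PT' mulmxBl !mulmxBr !mulmx1 TP h1.
    by rewrite subrr subr0.
  exact: psd_cong.
move=> P' Pp' Hs x hx; apply/H.
have P'x := img_fix Pp' hx.
have [c c0 pd] := pdens_scale (psd_xx x).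
have := Hs _ pd; rewrite !tr_scaleR ler_pM2l //.
rewrite -!bf_tr /bf -mulmxA P'x => hle.
have : bf (1%:M - T) x x = 0.
  apply/le_anti; rewrite P1T andbT /bf mulmxBr mulmx1 mulmxBl.
  by rewrite maddE moppE subr_le0.
move/(psd_null P1T); rewrite mulmxBl mul1mx => /eqP; rewrite subr_eq0 => /eqP.
by move=> <-.
Qed.
End Main.

Section Level.
Variable C : numClosedFieldType.
Variable n : nat.
Variables (G F : 'M[C]_n -> 'M[C]_n) (Qe : 'M[C]_n).
Implicit Types (R M P s : 'M[C]_n) (x : 'cV[C]_n).
Hypotheses (GL : linE G) (GP : forall s, psd s -> psd (G s))
  (GT : forall s, psd s -> \tr (G s) <= \tr s)
  (GD : forall M s, \tr (M *m G s) = \tr (F M *m s)) (Qp : proj Qe).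

Lemma tr_proj_le R s : proj R -> psd s -> \tr (R *m s) <= \tr s.
Proof.
move=> PR Ps; have -> : \tr s = \tr (1%:M *m s) by rewrite mul1mx.
rewrite -subr_ge0 -trB -mulmxBl.
exact: trpos (proj_psd (proj_compl PR)) Ps.
Qed.

Lemma FR R : proj R -> psd (F R) /\ psd (1%:M - F R).
Proof.
move=> PR; split => x; rewrite -/(bf _ x x) bf_tr.
  by rewrite -GD; apply: trpos; [exact: proj_psd | apply: GP; exact: psd_xx].
rewrite mulmxBl mul1mx trB -GD subr_ge0.
apply: le_trans (GT (psd_xx x)).
exact: tr_proj_le (GP (psd_xx x)).
Qed.

Lemma kerP M x : (x^T <= kermx M^T)%MS <-> M *m x = 0.
Proof.
rewrite sub_kermx -trmx_mul; split => [/eqP h|->]; last by rewrite trmx0.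
by rewrite -(trmxK (M *m x)) h trmx0.
Qed.

Lemma claim1 : exists P, (forall x, img P x <-> F Qe *m x = x) /\ proj P /\
  (forall s, pdens s -> \tr (P *m s) <= \tr (Qe *m G s)) /\
  (forall P', proj P' -> (forall s, pdens s -> \tr (P' *m s) <= \tr (Qe *m G s)) -> psub P' P).
Proof.
have [P [PP HP]] := projex (kermx (F Qe - 1%:M)^T).
have HP' : forall x, img P x <-> F Qe *m x = x.
  move=> x; rewrite HP kerP mulmxBl mul1mx; split => [/eqP|->]; last by rewrite subrr.
  by rewrite subr_eq0 => /eqP.
have [F1 F2] := FR Qp.
have [Ga Gb] := gen_fix F1 F2 PP HP'.
exists P; split => //; split => //; split.
  by move=> s [Ps _]; rewrite GD; apply: Ga.
by move=> P' PP' H; apply: Gb => // s ps; rewrite -GD; apply: H.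
Qed.

Lemma claim2 : exists P, (forall x, img P x <-> bf (F (1%:M - Qe)) x x = 0) /\ proj P /\
  (forall s, pdens s -> \tr (P *m s) <= \tr (Qe *m G s) + \tr s - \tr (G s)) /\
  (forall P', proj P' -> (forall s, pdens s -> \tr (P' *m s) <= \tr (Qe *m G s) + \tr s - \tr (G s)) -> psub P' P).
Proof.
set N := F (1%:M - Qe).
have [N1 N2] := FR (proj_compl Qp).
have [P [PP HP]] := projex (kermx N^T).
have HP' : forall x, img P x <-> (1%:M - N) *m x = x.
  move=> x; rewrite HP kerP mulmxBl mul1mx; split => [->|/eqP]; first by rewrite subr0.
  by rewrite subr_eq addrC -subr_eq subrr eq_sym => /eqP.
have Nx : forall x, bf N x x = 0 <-> N *m x = 0.
  move=> x; split; first exact: psd_null.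
  by move=> h; rewrite /bf -mulmxA h mulmx0 mxE.
have eqT : forall s, \tr ((1%:M - N) *m s) = \tr (Qe *m G s) + \tr s - \tr (G s).
  move=> s; rewrite mulmxBl mul1mx trB -GD mulmxBl mul1mx trB.
  by rewrite opprB addrCA addrA.
have N2' : psd (1%:M - (1%:M - N)) by rewrite opprB addrC subrK.
have [Ga Gb] := gen_fix N2 N2' PP HP'.
exists P; split.
  move=> x; rewrite HP' Nx mulmxBl mul1mx; split => [/eqP|->]; last by rewrite subr0.
  by rewrite subr_eq addrC -subr_eq subrr eq_sym => /eqP.
split => //; split.
  by move=> s [Ps _]; rewrite -eqT; apply: Ga.
by move=> P' PP' H; apply: Gb => // s ps; rewrite eqT; apply: H.
Qed.

Lemma claim3 : exists R, (forall x, img R x <-> supp (G Qe) x) /\ proj R /\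
  (forall s, pdens s -> \tr (Qe *m s) <= \tr (R *m G s) + \tr s - \tr (G s)) /\
  (forall R', proj R' -> (forall s, pdens s -> \tr (Qe *m s) <= \tr (R' *m G s) + \tr s - \tr (G s)) -> psub R R').
Proof.
set r0 := G Qe.
have Pr : psd r0 by apply: GP; exact: proj_psd.
have hr := psd_herm Pr.
have [R [PR HR]] := projex r0^T.
have HR' : forall x, img R x <-> exists y, x = r0 *m y.
  move=> x; rewrite HR; split.
    by case/submxP => z ez; exists z^T; rewrite -(trmxK x) ez trmx_mul trmxK.
  by case=> y ->; rewrite trmx_mul submxMl.
have Rr : R *m r0 = r0.
  by apply: mx_ext => y; rewrite -mulmxA; apply: img_fix => //; apply/HR'; exists y.
set K := F (1%:M - R).
have [K1 K2] := FR (proj_compl PR); rewrite -/K in K1 K2.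
have trKQ : \tr (K *m Qe) = 0.
  by rewrite /K -GD -/r0 mulmxBl mul1mx Rr subrr mxtrace0.
have KQ := psd_tr0_proj K1 Qp trKQ.
have hK := psd_herm K1.
have [Q1 Q2] := Qp.
have QK : Qe *m K = 0 by rewrite -hK -Q2 -hadj_mul KQ hadj0.
have eZ : 1%:M - K - Qe = hadj (1%:M - Qe) *m (1%:M - K) *m (1%:M - Qe).
  have e1 : (1%:M - Qe) *m (1%:M - K) = 1%:M - K - Qe.
    by rewrite mulmxBl mul1mx mulmxBr mulmx1 QK subr0.
  rewrite hadjB hadj1 Q2 e1 mulmxBr mulmx1 !mulmxBl mul1mx KQ Q1.
  by rewrite subr0 subrr subr0.
have PZ : psd (1%:M - K - Qe) by rewrite eZ; exact: psd_cong.
have eq3 : forall s, \tr (R *m G s) + \tr s - \tr (G s) = \tr ((1%:M - K) *m s).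
  move=> s; rewrite mulmxBl mul1mx trB /K -GD mulmxBl mul1mx trB.
  by rewrite opprB addrCA addrA.
exists R; split.
  by move=> x; rewrite HR'; apply: supp_range.
split => //; split.
  move=> s [Ps _]; rewrite eq3 -subr_ge0 -trB -mulmxBl.
  exact: trpos PZ Ps.
move=> R' PR' H x.
have [c c0 pd] := pdens_scale (proj_psd Qp).
have := H _ pd; rewrite (linEZ GL) !tr_scaleR !mxtraceZ -mulrDr -mulrBr ler_pM2l //.
rewrite Q1 -/r0 addrAC [X in _ <= X]addrC lerDl subr_ge0 => hle.
have h0 : \tr (r0 *m (1%:M - R')) = 0.
  have ge : 0 <= \tr ((1%:M - R') *m r0) by apply: trpos => //; exact: proj_psd (proj_compl PR').
  rewrite mxtrace_mulC; apply/le_anti; rewrite ge andbT.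
  by rewrite mulmxBl mul1mx trB subr_le0.
have := psd_tr0_proj Pr (proj_compl PR') h0.
rewrite mulmxBr mulmx1 => /eqP; rewrite subr_eq0 => /eqP rR.
have Rr' : R' *m r0 = r0 by rewrite -hr -(proj2 PR') -hadj_mul -rR.
case/HR' => y ->; exists (r0 *m y); by rewrite mulmxA Rr'.
Qed.
End Level.


Lemma sext_lin (C : numClosedFieldType) (V X : {fset nat}) (E : Op C V -> Op C V) :
  linE E -> linE (sext V X E).
Proof.
move=> L c A B; apply/matrixP => i j; rewrite !mxE.
set MA := \matrix_(a, b) A _ _; set MB := \matrix_(a, b) B _ _.
have -> : \matrix_(a, b) (c *: A + B) (rk (comb (ev a) (ev i))) (rk (comb (ev b) (ev j))) = c *: MA + MB.
  by apply/matrixP => a b; rewrite !mxE.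
by rewrite L !mxE.
Qed.

Section Glue.
Variable C : numClosedFieldType.
Variables (V W : {fset nat}) (E : Op C V -> Op C V).
Hypothesis DP : is_DProg E.
Let Y := (V `|` W)%fset.
Let VY : (V `<=` Y)%fset := fsubsetUl V W.

Lemma EL : linE E.
Proof. by case: DP. Qed.

Lemma sat_tot_iff (P Q : Op C Y) :
  sat_tot E P Q <-> forall s, pdens s -> \tr (P *m s) <= \tr (Q *m sext V Y E s).
Proof.
split => [H s ps|H X YX rho [Pr Tr]].
  by have := H Y (fsubset_refl _) s ps; rewrite !ext_id.
rewrite !tr_ext // ptr_sext //; last exact: EL.
apply: H; split; first exact: psd_ptr.
by rewrite tr_ptr.
Qed.

Lemma sat_par_iff (P Q : Op C Y) :
  sat_par E P Q <-> forall s, pdens s ->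
    \tr (P *m s) <= \tr (Q *m sext V Y E s) + \tr s - \tr (sext V Y E s).
Proof.
split => [H s ps|H X YX rho [Pr Tr]].
  by have := H Y (fsubset_refl _) s ps; rewrite !ext_id.
rewrite !tr_ext // ptr_sext //; last exact: EL.
rewrite -(tr_ptr Y rho) -(tr_ptr Y (sext V X E rho)) ptr_sext //; last exact: EL.
apply: H; split; first exact: psd_ptr.
by rewrite tr_ptr.
Qed.
End Glue.


End Aux.
Import Aux.

Theorem lemma4p6 (C : numClosedFieldType) (V W : {fset nat})
    (E Edag : Op C V -> Op C V) (Q : Op C W) :
  is_DProg E ->
  (forall A B : Op C V, \tr (E A *m B) = \tr (A *m Edag B)) ->
  proj Q ->
  (exists P : Op C (V `|` W)%fset,
     sp_eq (img P) (fixsp (sext V (V `|` W)%fset Edag (ext W (V `|` W)%fset Q))) /\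
     largest_proj (fun P' => sat_tot E P' (ext W (V `|` W)%fset Q)) P) /\
  (exists P : Op C (V `|` W)%fset,
     sp_eq (img P)
       (nullsp (sext V (V `|` W)%fset Edag (1%:M - ext W (V `|` W)%fset Q))) /\
     largest_proj (fun P' => sat_par E P' (ext W (V `|` W)%fset Q)) P) /\
  (exists R : Op C (V `|` W)%fset,
     sp_eq (img R) (supp (sext V (V `|` W)%fset E (ext W (V `|` W)%fset Q))) /\
     smallest_proj (fun R' => sat_par E (ext W (V `|` W)%fset Q) R') R).
Proof.
move=> DP D PQ.
have VY : (V `<=` V `|` W)%fset := fsubsetUl V W.
have WY : (W `<=` V `|` W)%fset := fsubsetUr V W.
have L := EL DP.
have GL : linE (sext V (V `|` W)%fset E) by apply: sext_lin.
have GP : forall s, psd s -> psd (sext V (V `|` W)%fset E s).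
  by case: DP => _ H _ s; apply: H.
have GT : forall s, psd s -> \tr (sext V (V `|` W)%fset E s) <= \tr s.
  move=> s Ps; rewrite -(tr_ptr V) ptr_sext // ?fsubset_refl // sext_id.
  case: DP => _ _ H; apply: le_trans (H _ (psd_ptr VY Ps)) _.
  by rewrite tr_ptr.
have GD : forall M s, \tr (M *m sext V (V `|` W)%fset E s) =
                      \tr (sext V (V `|` W)%fset Edag M *m s).
  by move=> M s; apply: sext_dual.
have Qp : proj (ext W (V `|` W)%fset Q) by apply: proj_ext.
split.
  have [P [H1 [H2 [H3 H4]]]] := claim1 GP GT GD Qp.
  exists P; split => //; split => //; first by apply/(sat_tot_iff DP).
  by move=> P' PP' /(sat_tot_iff DP) h; apply: H4.
split.
  have [P [H1 [H2 [H3 H4]]]] := claim2 GP GT GD Qp.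
  exists P; split => //; split => //; first by apply/(sat_par_iff DP).
  by move=> P' PP' /(sat_par_iff DP) h; apply: H4.
have [R [H1 [H2 [H3 H4]]]] := claim3 GL GP GT GD Qp.
exists R; split => //; split => //; first by apply/(sat_par_iff DP).
by move=> R' PR' /(sat_par_iff DP) h; apply: H4.
Qed.
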